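(* Let $1\le p\le q$ and let $\mu=(a_1,\dots,a_p\mid b_1,\dots,b_q)\in\mathbb{Z}^{p+q}$ be $\Delta^+(\mathfrak{k},\mathfrak{t})$-dominant and u-large, such that $\mu-\beta$ is also $\Delta^+(\mathfrak{k},\mathfrak{t})$-dominant. (a) If $b_1\ge 2p+1$, then $\|\mu\|_{\mathrm{spin}}>\|\mu-\beta\|_{\mathrm{spin}}$. (b) If $a_1\ge 2q+1$, then $\|\mu\|_{\mathrm{spin}}>\|\mu-\beta\|_{\mathrm{spin}}$.
   Context: Weights are vectors in $\mathbb{R}^n$, $n=p+q$, written $(x_1,\dots,x_p\mid y_1,\dots,y_q)$, with Euclidean norm $\|\cdot\|$. $\rho_c=(p,p-1,\dots,1\mid q,q-1,\dots,1)$, $\beta=(1,0,\dots,0\mid1,0,\dots,0)$. $\Delta^+(\mathfrak{k},\mathfrak{t})$-dominant means $x_1\ge\cdots\ge x_p\ge0$ and $y_1\ge\cdots\ge y_q\ge0$. For $\nu\in\mathbb{Z}^n$, $\{\nu\}$ is obtained by taking absolute values of all coordinates and sorting the first $p$ and the last $q$ coordinates separately in decreasing order; $\|\nu\|_{\mathfrak{k}}:=\|\{\nu\}+\rho_c\|$. $\Omega_{p,q}$ is the set of $(x\mid y)\in\mathbb{Z}^n$ with $q\ge x_1\ge\cdots\ge x_p\ge0$ and $y_j=\#\{i\mid q-x_i\ge j\}$ ($1\le j\le q$). Spin norm: $\|\nu\|_{\mathrm{spin}}=\min_{\tau\in\Omega_{p,q}}\|\nu-\tau\|_{\mathfrak{k}}$.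 $\mu$ is u-large iff there exist $0\le f\le p$, $0\le g\le q$ with $\sum_{i=1}^f a_i+\sum_{j=1}^g b_j>2pq-2(p-f)(q-g)$. *)

(* Defs.v *)
From mathcomp Require Import all_boot all_order all_algebra.
Set Implicit Arguments. Unset Strict Implicit. Unset Printing Implicit Defensive.
Import Order.TTheory GRing.Theory Num.Theory.
Local Open Scope ring_scope.

(* A weight (x_1..x_p | y_1..y_q) in Z^{p+q} is represented by the pair of
   sequences x (length p) and y (length q); index 0 is coordinate 1. *)

Definition dominant (s : seq int) : bool :=
  sorted (fun u v : int => v <= u) s && all (fun u : int => 0 <= u) s.

Definition addv (s t : seq int) : seq int := [seq u.1 + u.2 | u <- zip s t].
Definition subv (s t : seq int) : seq int := [seq u.1 - u.2 | u <- zip s t].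

Definition rho_c (k : nat) : seq int := [seq ((k - i)%N)%:Z | i <- iota 0 k].

Definition curly (s : seq int) : seq int :=
  sort (fun u v : int => v <= u) [seq `|z| | z <- s].

Definition normsq (s : seq int) : int := \sum_(z <- s) z ^+ 2.

Definition euclid_norm (R : rcfType) (u v : seq int) : R :=
  Num.sqrt ((normsq u + normsq v)%:~R).

Definition norm_k (R : rcfType) (x y : seq int) : R :=
  euclid_norm R (addv (curly x) (rho_c (size x))) (addv (curly y) (rho_c (size y))).

(* Omega_{p,q}: x given by f : 'I_p -> {0..q}, q >= x_1 >= ... >= x_p >= 0,
   y_j = #{ i | q - x_i >= j }, 1 <= j <= q. *)
Definition omega_x (p q : nat) (f : {ffun 'I_p -> 'I_q.+1}) : seq nat :=
  [seq nat_of_ord (f i) | i <- enum 'I_p].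
Definition in_omega (p q : nat) (f : {ffun 'I_p -> 'I_q.+1}) : bool :=
  sorted geq (omega_x f).
Definition omega_y (q : nat) (x : seq nat) : seq nat :=
  [seq count (fun xi => (j <= q - xi)%N) x | j <- iota 1 q].
Definition tau_x (p q : nat) (f : {ffun 'I_p -> 'I_q.+1}) : seq int :=
  [seq n%:Z | n <- omega_x f].
Definition tau_y (p q : nat) (f : {ffun 'I_p -> 'I_q.+1}) : seq int :=
  [seq n%:Z | n <- omega_y q (omega_x f)].

Definition omega0 (p q : nat) : {ffun 'I_p -> 'I_q.+1} := [ffun => ord0].

(* ||nu||_spin = min_{tau in Omega_{p,q}} || nu - tau ||_k
   (the seed omega0 is itself an element of Omega_{p,q}). *)
Definition spin_norm (R : rcfType) (p q : nat) (x y : seq int) : R :=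
  \big[Num.min/norm_k R (subv x (tau_x (omega0 p q))) (subv y (tau_y (omega0 p q)))]_(f : {ffun 'I_p -> 'I_q.+1} | in_omega f)
     norm_k R (subv x (tau_x f)) (subv y (tau_y f)).

Definition u_large (p q : nat) (a b : seq int) : bool :=
  [exists f : 'I_p.+1, exists g : 'I_q.+1,
    ((2 * p * q)%N%:Z - (2 * (p - f) * (q - g))%N%:Z <
       \sum_(i < f) a`_i + \sum_(j < g) b`_j)].

(* subtract 1 from the first coordinate of a block (beta = (1,0..|1,0..)) *)
Definition minus_first (s : seq int) : seq int :=
  match s with [::] => [::] | z :: t => (z - 1) :: t end.

(* Main.v *)
Require Import Defs.
From mathcomp Require Import all_boot all_order all_algebra.
From mathcomp Require Import zify.
Import Defs.
Import Order.TTheory GRing.Theory Num.Theory.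
Local Open Scope ring_scope.

Definition Hs (s : seq int) : int :=
  \sum_(z <- s) (`|z| ^+ 2 + `|z|) + \sum_(z <- s) \sum_(w <- s) Num.max `|z| `|w|.

Lemma rho_cS n : rho_c n.+1 = (n.+1)%:Z :: rho_c n.
Proof.
rewrite /rho_c /= subn0; congr cons.
rewrite -(addn0 1%N) iotaDl -map_comp; apply: eq_map => i /=.
by rewrite subSS.
Qed.

Lemma sum_const_seq (t : seq int) (c : int) : \sum_(w <- t) c = c * (size t)%:Z.
Proof.
elim: t => [|w t IH]; first by rewrite big_nil mulr0.
rewrite big_cons IH /=; lia.
Qed.

Lemma key_sorted (c : seq int) :
  sorted (fun u v : int => v <= u) c -> all (fun u : int => 0 <= u) c ->
  normsq (addv c (rho_c (size c))) = Hs c + normsq (rho_c (size c)).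
Proof.
elim: c => [|h t IH]; first by rewrite /normsq /Hs !big_nil.
move=> Hsort /= /andP[h0 Ht].
have Hst : sorted (fun u v : int => v <= u) t := path_sorted Hsort.
have Hmin : all (fun v : int => v <= h) t.
  by apply: (order_path_min _ Hsort) => x y z Hxy Hyz; exact: le_trans Hyz Hxy.
rewrite rho_cS /addv /= -/(addv t (rho_c (size t))) /normsq !big_cons.
rewrite -/(normsq (addv t (rho_c (size t)))) -/(normsq (rho_c (size t))).
rewrite (IH Hst Ht) /Hs !big_cons.
have E1 : \sum_(w <- t) Num.max `|h| `|w| = h * (size t)%:Z.
  rewrite -sum_const_seq big_seq_cond [RHS]big_seq_cond; apply: eq_bigr => w.
  rewrite andbT => wt.
  have := allP Hmin w wt; have := allP Ht w wt => /= w0 wh; lia.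
have E2 : \sum_(z <- t) (Num.max `|z| `|h| + \sum_(w <- t) Num.max `|z| `|w|)
   = h * (size t)%:Z + \sum_(z <- t) \sum_(w <- t) Num.max `|z| `|w|.
  rewrite big_split /=; congr (_ + _); rewrite -sum_const_seq big_seq_cond [RHS]big_seq_cond; apply: eq_bigr => w.
  rewrite andbT => wt.
  have := allP Hmin w wt; have := allP Ht w wt => /= w0 wh; lia.
rewrite E1.
under [X in _ = _ + (_ + X) + _]eq_bigr do rewrite big_cons.
rewrite E2.
have -> : `|h| = h by lia.
rewrite maxxx.
set S1 := \sum_(z <- t) _; set S2 := \sum_(z <- t) _; set N := normsq _.
rewrite -[(size t).+1]addn1 PoszD. lia.
Qed.

Lemma Hs_perm s s' : perm_eq s s' -> Hs s = Hs s'.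
Proof.
move=> P; rewrite /Hs (perm_big _ P) [in LHS](perm_big _ P); congr (_ + _).
apply: eq_bigr => z _; exact: perm_big.
Qed.

Lemma Hs_abs (s : seq int) : Hs [seq `|z| | z <- s] = Hs s.
Proof.
rewrite /Hs big_map; congr (_ + _).
rewrite big_map; apply: eq_bigr => z _; rewrite big_map; apply: eq_bigr => w _.
by rewrite !normr_id.
Qed.

Lemma normk_block (s : seq int) :
  normsq (addv (curly s) (rho_c (size s))) = Hs s + normsq (rho_c (size s)).
Proof.
have Esz : size (curly s) = size s by rewrite /curly size_sort size_map.
rewrite -{1}Esz key_sorted ?Esz.
- by rewrite (@Hs_perm _ [seq `|z| | z <- s]) ?Hs_abs // perm_sort.
- by apply: sort_sorted => u v; exact: le_total.
- by rewrite /curly all_sort all_map; apply/allP => z _ /=.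
Qed.
Definition Habs n (c : nat -> int) : int :=
  \sum_(a < n) (c a ^+ 2 + c a) + \sum_(a < n) \sum_(b < n) Num.max (c a) (c b).

Lemma Habs_ext n c c' : (forall i, (i < n)%N -> c i = c' i) -> Habs n c = Habs n c'.
Proof.
move=> E; rewrite /Habs; congr (_ + _).
  by apply: eq_bigr => a _; rewrite E.
apply: eq_bigr => a _; apply: eq_bigr => b _; by rewrite !E.
Qed.

Lemma Habs_mono n c c' k : (forall i, (i < n)%N -> 0 <= c' i <= c i) ->
  (k < n)%N -> c' k < c k -> Habs n c' < Habs n c.
Proof.
move=> H Hk Hlt; rewrite /Habs; apply: ltr_leD.
  rewrite (bigD1 (Ordinal Hk)) //= [X in _ < X](bigD1 (Ordinal Hk)) //=.
  apply: ltr_leD.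
    have := H k Hk; nia.
  apply: ler_sum => a _; have := H a (ltn_ord a); nia.
apply: ler_sum => a _; apply: ler_sum => b _.
have := H a (ltn_ord a); have := H b (ltn_ord b); lia.
Qed.

Lemma sum2 n (F : 'I_n -> int) (i k : 'I_n) : i != k ->
  \sum_(a < n) F a = F i + F k + \sum_(a < n | (a != i) && (a != k)) F a.
Proof.
move=> ik; rewrite (bigD1 i) //= (bigD1 k) /=; last by rewrite eq_sym.
rewrite addrA; congr (_ + _); apply: eq_bigl => a; by rewrite andbC.
Qed.

Lemma Habs_move n c c' i k : (i < n)%N -> (k < n)%N -> i <> k ->
  (forall a, (a < n)%N -> a <> i -> a <> k -> c' a = c a) ->
  c' i = c i + 1 -> c' k = c k - 1 -> c i + 1 <= c k ->
  Habs n c' <= Habs n c + 2 * (c i + 1 - c k).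
Proof.
move=> Hi Hk ik E Ei Ek Hle.
set I := Ordinal Hi; set K := Ordinal Hk.
have IK : I != K by apply/eqP => -[].
have rest : forall (G : int -> int -> int),
   \sum_(a < n | (a != I) && (a != K)) G (c' a) (c a)
   = \sum_(a < n | (a != I) && (a != K)) G (c a) (c a).
  move=> G; apply: eq_bigr => a /andP[ai ak]; rewrite E //.
    by move=> h; move/eqP: ai; apply; apply: val_inj.
  by move=> h; move/eqP: ak; apply; apply: val_inj.
rewrite /Habs.
have L1 : \sum_(a < n) (c' a ^+ 2 + c' a) =
   \sum_(a < n) (c a ^+ 2 + c a) + 2 * (c i + 1 - c k).
  rewrite (sum2 _ _ _ _ IK) [in RHS](sum2 _ _ _ _ IK) /=.
  rewrite (rest (fun x _ => x ^+ 2 + x)) /= Ei Ek.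
  set S := \sum_(a < n | _) _; lia.
have row : forall (d : nat -> int) (a : 'I_n),
   \sum_(b < n) Num.max (d a) (d b) = Num.max (d a) (d i) + Num.max (d a) (d k)
      + \sum_(b < n | (b != I) && (b != K)) Num.max (d a) (d b).
  by move=> d a; rewrite (sum2 _ _ _ _ IK).
have rest2 : forall x : int,
   \sum_(b < n | (b != I) && (b != K)) Num.max x (c' b)
   = \sum_(b < n | (b != I) && (b != K)) Num.max x (c b).
  move=> x; exact: (rest (fun y _ => Num.max x y)).
rewrite L1.
suff HH : \sum_(a < n) \sum_(b < n) Num.max (c' a) (c' b)
   <= \sum_(a < n) \sum_(b < n) Num.max (c a) (c b).
  set X1 := \sum_(a < n) (_ + _) in HH *; set X2 := \sum_(a < n) \sum_(b < n) _ in HH *.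
  set X3 := \sum_(a < n) \sum_(b < n) _ in HH *; lia.
rewrite (sum2 _ _ _ _ IK) [X in _ <= X](sum2 _ _ _ _ IK) /=.
rewrite (row c' I) (row c' K) (row c I) (row c K) /= !rest2 Ei Ek.
have Hr : \sum_(a < n | (a != I) && (a != K)) \sum_(b < n) Num.max (c' a) (c' b)
  <= \sum_(a < n | (a != I) && (a != K)) \sum_(b < n) Num.max (c a) (c b).
  apply: ler_sum => a /andP[ai ak].
  have ea : c' a = c a.
    rewrite E //.
      by move=> h; move/eqP: ai; apply; apply: val_inj.
    by move=> h; move/eqP: ak; apply; apply: val_inj.
  rewrite (row c' a) (row c a) rest2 Ei Ek ea lerD2r; lia.
set A1 := \sum_(a < n | _) \sum_(b < n) _ in Hr *.
set A2 := \sum_(a < n | _) \sum_(b < n) _ in Hr *.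
have Hb : \sum_(b < n | (b != I) && (b != K)) Num.max (c i + 1) (c b)
   + \sum_(b < n | (b != I) && (b != K)) Num.max (c k - 1) (c b)
  <= \sum_(b < n | (b != I) && (b != K)) Num.max (c i) (c b)
   + \sum_(b < n | (b != I) && (b != K)) Num.max (c k) (c b).
  rewrite -!big_split /=; apply: ler_sum => b _; lia.
set B1 := \sum_(b < n | _) Num.max (c i + 1) _ in Hb *.
set B2 := \sum_(b < n | _) Num.max (c k - 1) _ in Hb *.
set B3 := \sum_(b < n | _) Num.max (c i) _ in Hb *.
set B4 := \sum_(b < n | _) Num.max (c k) _ in Hb *.
lia.
Qed.

Lemma Hs_nth (s : seq int) : Hs s = Habs (size s) (fun i => `|nth 0 s i|).
Proof.
rewrite /Hs /Habs; congr (_ + _).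
  by rewrite (big_nth 0) big_mkord.
rewrite (big_nth 0) big_mkord; apply: eq_bigr => i _.
by rewrite (big_nth 0) big_mkord.
Qed.

Lemma Habs_ge0 n c : (forall i, (i < n)%N -> 0 <= c i) -> 0 <= Habs n c.
Proof.
move=> H; rewrite /Habs; apply: addr_ge0; apply: sumr_ge0 => a _.
  have := H a (ltn_ord a); nia.
apply: sumr_ge0 => b _; have := H a (ltn_ord a); lia.
Qed.

Lemma normsq_ge0 s : 0 <= normsq s.
Proof. rewrite /normsq; apply: sumr_ge0 => z _; exact: sqr_ge0. Qed.

Lemma size_subv s t : size (subv s t) = minn (size s) (size t).
Proof. by rewrite /subv size_map size_zip. Qed.

Lemma nth_subv s t i : (i < minn (size s) (size t))%N ->
  nth 0 (subv s t) i = nth 0 s i - nth 0 t i.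
Proof.
move=> Hi; rewrite /subv (nth_map (0, 0)) ?size_zip // nth_zip_cond /=.
by rewrite size_zip Hi.
Qed.

Set Implicit Arguments.
Section Omega.
Variables (p q : nat).
Implicit Type f : {ffun 'I_p -> 'I_q.+1}.

Definition xf f i := nth 0%N (omega_x f) i.
Definition yf f j := nth 0%N (omega_y q (omega_x f)) j.

Lemma size_omega_x f : size (omega_x f) = p.
Proof. by rewrite /omega_x size_map size_enum_ord. Qed.

Lemma xf_ord f (i : 'I_p) : xf f i = f i.
Proof. by rewrite /xf /omega_x (nth_map i) ?size_enum_ord // nth_ord_enum. Qed.

Lemma xf_le f i : (i < p)%N -> (xf f i <= q)%N.
Proof. move=> Hi; have := xf_ord f (Ordinal Hi) => /= ->; by rewrite -ltnS. Qed.

Lemma yf_count f j : (j < q)%N ->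
  yf f j = count (fun xi => (j.+1 <= q - xi)%N) (omega_x f).
Proof.
move=> Hj; rewrite /yf /omega_y (nth_map 0%N) ?size_iota // nth_iota //.
Qed.

Lemma yf_le f j : (j < q)%N -> (yf f j <= p)%N.
Proof. move=> Hj; rewrite yf_count // -{2}(size_omega_x f); exact: count_size. Qed.

Lemma size_tau_x f : size (tau_x f) = p.
Proof. by rewrite /tau_x size_map size_omega_x. Qed.
Lemma size_tau_y f : size (tau_y f) = q.
Proof. by rewrite /tau_y /omega_y !size_map size_iota. Qed.
Lemma nth_tau_x f i : (i < p)%N -> nth 0 (tau_x f) i = (xf f i)%:Z.
Proof. by move=> Hi; rewrite /tau_x (nth_map 0%N) ?size_omega_x. Qed.
Lemma nth_tau_y f j : (j < q)%N -> nth 0 (tau_y f) j = (yf f j)%:Z.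
Proof. by move=> Hj; rewrite /tau_y (nth_map 0%N) // /omega_y size_map size_iota. Qed.

Lemma in_omegaP f : reflect (forall i, (i.+1 < p)%N -> (xf f i.+1 <= xf f i)%N) (in_omega f).
Proof.
apply: (iffP (sortedP 0%N)); rewrite size_omega_x //.
Qed.

Lemma in_omega_mono f i j : in_omega f -> (i <= j)%N -> (j < p)%N -> (xf f j <= xf f i)%N.
Proof.
move=> H ij jp.
have := @sorted_leq_nth _ geq _ _ 0%N _ H i j; rewrite !inE size_omega_x; apply => //.
- by move=> x y z /= h1 h2; exact: leq_trans h2 h1.
- by move=> x /=.
- exact: leq_ltn_trans ij jp.
Qed.

Definition modf f (k w : nat) : {ffun 'I_p -> 'I_q.+1} :=
  [ffun i : 'I_p => inord (if (i == k :> nat) then w else f i)].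

Lemma xf_modf f k w i : (w <= q)%N -> (i < p)%N ->
  xf (modf f k w) i = if i == k then w else xf f i.
Proof.
move=> wq ip; rewrite (xf_ord _ (Ordinal ip)) (xf_ord _ (Ordinal ip)) ffunE /=.
case: (i == k); rewrite inordK //; exact: ltn_ord.
Qed.

Lemma omega_x_modf f k w : (w <= q)%N -> (k < p)%N ->
  omega_x (modf f k w) = set_nth 0%N (omega_x f) k w.
Proof.
move=> wq kp; apply: (eq_from_nth (x0 := 0%N)).
  by rewrite size_set_nth !size_omega_x; apply/esym/maxn_idPr.
move=> i; rewrite size_omega_x => ip; rewrite nth_set_nth /=.
by rewrite -/(xf _ i) xf_modf.
Qed.

Lemma count_ge_nth (a : pred nat) s k : (k < size s)%N -> (a (nth 0%N s k) <= count a s)%N.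
Proof.
move=> ks; case E: (a (nth 0%N s k)) => //=.
rewrite -has_count; apply/hasP; exists (nth 0%N s k) => //; exact: mem_nth.
Qed.

Lemma yf_modf f k w j : (w <= q)%N -> (k < p)%N -> (j < q)%N ->
  (yf (modf f k w) j + (j.+1 <= q - xf f k)%N = yf f j + (j.+1 <= q - w)%N)%N.
Proof.
move=> wq kp jq; rewrite !yf_count // omega_x_modf // count_set_nth_ltn ?size_omega_x //.
have := @count_ge_nth (fun xi => (j.+1 <= q - xi)%N) (omega_x f) k.
rewrite size_omega_x -/(xf f k) => /(_ kp) /=.
set c := count _ _; set u := nat_of_bool _; set v := nat_of_bool _.
lia.
Qed.

End Omega.

Section Spin.
Variables (p q : nat).
Implicit Type f : {ffun 'I_p -> 'I_q.+1}.

Definition Tot (a b : seq int) f :=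
  Habs p (fun i => `|a`_i - (xf f i)%:Z|) + Habs q (fun j => `|b`_j - (yf f j)%:Z|).

Lemma norm_k_Tot (R : rcfType) (a b : seq int) f : size a = p -> size b = q ->
  norm_k R (subv a (tau_x f)) (subv b (tau_y f)) =
  Num.sqrt ((Tot a b f + (normsq (rho_c p) + normsq (rho_c q)))%:~R).
Proof.
move=> Ha Hb; rewrite /norm_k /euclid_norm !normk_block !Hs_nth !size_subv.
rewrite size_tau_x size_tau_y Ha Hb !minnn /Tot; congr (Num.sqrt _%:~R).
rewrite (@Habs_ext _ _ (fun i => `|a`_i - (xf f i)%:Z|)); last first.
  by move=> i ip; rewrite nth_subv ?size_tau_x ?Ha ?minnn // nth_tau_x.
rewrite [Habs q _](@Habs_ext _ _ (fun i => `|b`_i - (yf f i)%:Z|)); last first.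
  by move=> i ip; rewrite nth_subv ?size_tau_y ?Hb ?minnn // nth_tau_y.
lia.
Qed.

Lemma Tot_ge0 a b f : 0 <= Tot a b f.
Proof. by rewrite /Tot; apply: addr_ge0; apply: Habs_ge0. Qed.

Lemma in_omega0 : in_omega (omega0 p q).
Proof.
apply/in_omegaP => i ip.
rewrite (xf_ord _ (Ordinal ip)) (xf_ord _ (Ordinal (ltnW ip))) !ffunE //.
Qed.

Lemma spin_lt (R : rcfType) (a b a' b' : seq int) :
  size a = p -> size b = q -> size a' = p -> size b' = q ->
  (forall f, in_omega f -> exists f', in_omega f' /\ Tot a' b' f' < Tot a b f) ->
  spin_norm R p q a' b' < spin_norm R p q a b.
Proof.
move=> Ha Hb Ha' Hb' H.
have Hf : forall f, in_omega f ->
    spin_norm R p q a' b' < norm_k R (subv a (tau_x f)) (subv b (tau_y f)).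
  move=> f /H [f' [Hf' Hlt]].
  apply: (le_lt_trans (y := norm_k R (subv a' (tau_x f')) (subv b' (tau_y f')))).
    exact: bigmin_le_cond.
  have Hpos : 0 < Tot a b f + (normsq (rho_c p) + normsq (rho_c q)).
    have := Tot_ge0 a' b' f'; have := normsq_ge0 (rho_c p); have := normsq_ge0 (rho_c q); lia.
  rewrite !norm_k_Tot // ltr_sqrt ?ltr_int ?ltrD2r // ltr0z //.
rewrite {2}/spin_norm; apply: lt_bigmin; last by move=> f /Hf.
exact: (Hf _ in_omega0).
Qed.
End Spin.

Ltac gen_nth := repeat match goal with
 | |- context[nth ?d ?s ?i] => let A := fresh "A" in set A := nth d s i in *; clearbody A
 | H : context[nth ?d ?s ?i] |- _ => let A := fresh "A" in set A := nth d s i in *; clearbody A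
 end.
Ltac mlia := gen_nth; lia.

Lemma mf_nth (s : seq int) i : (0 < size s)%N -> (minus_first s)`_i = s`_i - (i == 0%N)%:Z.
Proof. case: s => // z s _; case: i => [|i] /=; by rewrite ?subr0. Qed.

Lemma size_mf (s : seq int) : size (minus_first s) = size s.
Proof. by case: s. Qed.

Section Core.
Variables (p q : nat) (a b : seq int).
Hypotheses (Hp : (0 < p)%N) (Hq : (0 < q)%N) (Ha : size a = p) (Hb : size b = q).
Hypotheses (Ha0 : 1 <= a`_0) (Hb0 : 1 <= b`_0).
Hypotheses (Hamono : forall i, (0 < i < p)%N -> a`_i <= a`_0 - 1).
Hypotheses (Hbmono : forall j, (0 < j < q)%N -> b`_j <= b`_0 - 1).
Hypotheses (Hann : forall i, (i < p)%N -> 0 <= a`_i) (Hbnn : forall j, (j < q)%N -> 0 <= b`_j).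

Let a' := minus_first a.
Let b' := minus_first b.

Lemma TotmfE (f : {ffun 'I_p -> 'I_q.+1}) : Tot a' b' f =
  Habs p (fun i => `|a`_i - (i == 0%N)%:Z - (xf f i)%:Z|) +
  Habs q (fun j => `|b`_j - (j == 0%N)%:Z - (yf f j)%:Z|).
Proof.
rewrite /Tot; congr (_ + _); apply: Habs_ext => i ip; rewrite mf_nth //.
  by rewrite Ha. by rewrite Hb.
Qed.

Lemma case1 (f : {ffun 'I_p -> 'I_q.+1}) : 1 <= a`_0 - (xf f 0)%:Z -> 1 <= b`_0 - (yf f 0)%:Z -> Tot a' b' f < Tot a b f.
Proof.
move=> h1 h2; rewrite TotmfE /Tot; apply: ltrD.
  apply: (@Habs_mono _ _ _ 0%N) => //; last by mlia.
  by case=> [|i] ip; mlia.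
apply: (@Habs_mono _ _ _ 0%N) => //; last by mlia.
by case=> [|i] ip; mlia.
Qed.

Lemma caseA2 (f : {ffun 'I_p -> 'I_q.+1}) :
  ((2 * p + 1)%N%:Z <= b`_0) -> in_omega f -> a`_0 <= (xf f 0)%:Z ->
  exists f' : {ffun 'I_p -> 'I_q.+1}, in_omega f' /\ Tot a' b' f' < Tot a b f.
Proof.
move=> hb Hf hv.
set s := omega_x f; set v := xf f 0 in hv *.
have Hs : size s = p by rewrite size_omega_x.
have vq : (v <= q)%N by exact: xf_le.
have v1 : (1 <= v)%N by mlia.
have Hmono : forall i j, (i <= j)%N -> (j < p)%N -> (xf f j <= xf f i)%N.
  by move=> i j ij jp; exact: in_omega_mono.
set m := find (fun xi => (xi < v)%N) s.
have m_le : (m <= p)%N by rewrite -Hs find_size.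
have m_gt0 : (0 < m)%N.
  rewrite lt0n; apply/negP => /eqP m0.
  have hh : has (fun xi => (xi < v)%N) s by rewrite has_find -/m m0 Hs.
  by have := nth_find 0%N hh; rewrite -[find _ s]/m m0 -/(xf f 0) -/v ltnn.
set k := m.-1.
have kp : (k < p)%N by rewrite /k; lia.
have Xle : forall i, (i <= k)%N -> xf f i = v.
  move=> i ik; apply/eqP; rewrite eqn_leq Hmono //; last by lia.
  have := before_find 0%N (a := fun xi => (xi < v)%N) (s := s) (i := i).
  rewrite -/m -/(xf f i) => /(_ _) h; rewrite leqNgt h //; lia.
have Xk1 : (k.+1 < p)%N -> (xf f k.+1 < v)%N.
  move=> h; have hh : has (fun xi => (xi < v)%N) s by rewrite has_find -/m Hs; lia.
  by have := nth_find 0%N hh; rewrite -/m -/(xf f m) /k prednK.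
have wq : (v.-1 <= q)%N by lia.
set f' := modf f k v.-1.
have HX : forall i, (i < p)%N -> xf f' i = if i == k then v.-1 else xf f i.
  by move=> i ip; rewrite /f' xf_modf.
have Hf' : in_omega f'.
  apply/in_omegaP => i ip; rewrite !HX //; last by lia.
  case: (eqVneq i.+1 k) => [e|ne].
    by rewrite (Xle i) ?ifN_eq //; lia.
  case: (eqVneq i k) => [e|ne2].
    by rewrite e; have := Xk1; rewrite -e => /(_ ip); lia.
  by move/in_omegaP: Hf => /(_ i ip).
have HY : forall j, (j < q)%N -> yf f' j = (yf f j + (j == q - v))%N.
  move=> j jq; have := @yf_modf p q f k v.-1 j wq kp jq; rewrite -/f' Xle //; lia.
exists f'; split => //.
rewrite TotmfE /Tot; apply: ler_ltD.
-
  case: (eqVneq k 0%N) => [k0|kn0].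
    rewrite le_eqVlt; apply/orP; left; apply/eqP; apply: Habs_ext => i ip; rewrite HX //.
    case: ifP => [ik|ik].
      have i0 : i = 0%N by apply/eqP; rewrite -k0.
      by rewrite i0 -/v; mlia.
    case: i ip ik => [|i] ip ik; last by mlia.
    by rewrite k0 in ik.
  have Xk : xf f k = v by apply: Xle.
  have ak : a`_k <= a`_0 - 1 by apply: Hamono; rewrite kp lt0n kn0.
  have HM := @Habs_move p (fun i => `|a`_i - (xf f i)%:Z|)
     (fun i => `|a`_i - (i == 0%N)%:Z - (xf f' i)%:Z|) 0%N k Hp kp.
  apply: le_trans (HM _ _ _ _ _) _.
  - by move=> e; rewrite e eqxx in kn0.
  - move=> i ip i0 ik; cbv beta; rewrite HX // ifN_eq; last by apply/eqP.
    have -> : (i == 0%N) = false by apply/eqP.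
    by mlia.
  - by cbv beta; rewrite HX // ifN_eq 1?eq_sym // -/v eqxx; mlia.
  - by cbv beta; rewrite HX // eqxx Xk (negbTE kn0); mlia.
  - by cbv beta; rewrite Xk -/v; mlia.
  - cbv beta; rewrite Xk -/v -[X in _ <= X]addr0 lerD2l; mlia.
-
  have Y0 : (yf f 0 <= p)%N by apply: yf_le.
  set J := (q - v)%N in HY *.
  have Jq : (J < q)%N by rewrite /J; lia.
  case: (eqVneq J 0%N) => [J0|Jn0].
    apply: (@Habs_mono _ _ _ 0%N) => //; last first.
      by cbv beta; rewrite HY // J0 eqxx; mlia.
    move=> j jq; cbv beta; rewrite HY //.
    case: (eqVneq j 0%N) => [->|jn0]; first by rewrite J0 eqxx; mlia.
    by rewrite J0 (negbTE jn0); mlia.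
  have HYJ : (yf f' J <= p)%N by apply: yf_le.
  rewrite HY // eqxx in HYJ.
  have bJ := Hbnn _ Jq.
  case: (lerP 1 (b`_J - (yf f J)%:Z)) => hJ.
    apply: (@Habs_mono _ _ _ 0%N) => //; last first.
      by cbv beta; rewrite HY // eq_sym (negbTE Jn0) eqxx; mlia.
    move=> j jq; cbv beta; rewrite HY //.
    case: (eqVneq j J) => [->|jnJ]; first by rewrite (negbTE Jn0); mlia.
    case: (eqVneq j 0%N) => [->|jn0]; first by mlia.
    by mlia.
  have HM := @Habs_move q (fun j => `|b`_j - (yf f j)%:Z|)
     (fun j => `|b`_j - (j == 0%N)%:Z - (yf f' j)%:Z|) J 0%N Jq Hq.
  apply: le_lt_trans (HM _ _ _ _ _) _.
  - by move=> e; rewrite e eqxx in Jn0.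
  - move=> j jq jJ j0; cbv beta; rewrite HY // (_ : (j == J) = false); last by apply/eqP.
    rewrite (_ : (j == 0%N) = false); last by apply/eqP.
    by mlia.
  - by cbv beta; rewrite HY // eqxx (negbTE Jn0); mlia.
  - by cbv beta; rewrite HY // eqxx eq_sym (negbTE Jn0); mlia.
  - by cbv beta; mlia.
  - cbv beta; rewrite -[X in _ < X]addr0 ltrD2l; mlia.
Qed.

Lemma caseB2 (f : {ffun 'I_p -> 'I_q.+1}) :
  ((2 * q + 1)%N%:Z <= a`_0) -> in_omega f -> b`_0 <= (yf f 0)%:Z ->
  exists f' : {ffun 'I_p -> 'I_q.+1}, in_omega f' /\ Tot a' b' f' < Tot a b f.
Proof.
move=> ha Hf hv.
set s := omega_x f.
have Hs : size s = p by rewrite size_omega_x.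
have Hmono : forall i j, (i <= j)%N -> (j < p)%N -> (xf f j <= xf f i)%N.
  by move=> i j ij jp; exact: in_omega_mono.
have Y0c : yf f 0 = count (fun xi => (xi < q)%N) s.
  rewrite yf_count //; apply: eq_count => xi; by rewrite subn_gt0.
set i0 := find (fun xi => (xi < q)%N) s.
have hs : has (fun xi => (xi < q)%N) s.
  rewrite has_count -Y0c; mlia.
have i0p : (i0 < p)%N by rewrite -Hs -has_find.
set v := xf f i0.
have vq : (v < q)%N by have := nth_find 0%N hs.
have Xbef : forall i, (i < i0)%N -> xf f i = q.
  move=> i ii0; apply/eqP; rewrite eqn_leq xf_le; last by lia.
  have := before_find 0%N (a := fun xi => (xi < q)%N) (s := s) (i := i).
  by rewrite -/i0 -/(xf f i) => /(_ ii0) h; rewrite leqNgt h.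
have Xaft : forall i, (i0 <= i)%N -> (i < p)%N -> (xf f i <= v)%N.
  by move=> i h1 h2; apply: Hmono.
have wq : (v.+1 <= q)%N by [].
set f' := modf f i0 v.+1.
have HX : forall i, (i < p)%N -> xf f' i = if i == i0 then v.+1 else xf f i.
  by move=> i ip; rewrite /f' xf_modf.
have Hf' : in_omega f'.
  apply/in_omegaP => i ip; rewrite !HX //; last by lia.
  case: (eqVneq i.+1 i0) => [e|ne].
    by rewrite (Xbef i) ?ifN_eq //; lia.
  case: (eqVneq i i0) => [e|ne2].
    by have := Xaft i.+1; rewrite e; lia.
  by move/in_omegaP: Hf => /(_ i ip).
set J := (q - v.+1)%N.
have Jq : (J < q)%N by rewrite /J; lia.
have HY : forall j, (j < q)%N -> yf f j = (yf f' j + (j == J))%N.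
  move=> j jq; have := @yf_modf p q f i0 v.+1 j wq i0p jq; rewrite -/f' -/v /J; lia.
have YJ : yf f J = yf f 0.
  rewrite Y0c yf_count //; apply: eq_in_count => xi xin.
  have := nth_index 0%N xin; have := index_mem xi s; rewrite xin Hs => ip.
  rewrite -/(xf f (index xi s)) => <-.
  case: (ltnP (index xi s) i0) => h.
    by rewrite Xbef //; lia.
  by have := Xaft _ h ip; rewrite /J; lia.
exists f'; split => //.
have X0q : (xf f 0 <= q)%N by apply: xf_le.
rewrite TotmfE /Tot; apply: ltr_leD.
-
  case: (eqVneq i0 0%N) => [i00|i0n0].
    have v0 : v = xf f 0 by rewrite /v i00.
    apply: (@Habs_mono _ _ _ 0%N) => //; last first.
      by cbv beta; rewrite HX // -i00 eqxx; rewrite i00; mlia.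
    move=> i ip; cbv beta; rewrite HX //.
    case: (eqVneq i i0) => [->|ne]; first by rewrite i00; mlia.
    by mlia.
  have ai0 := Hann _ i0p.
  case: (lerP 1 (a`_i0 - v%:Z)) => hJ.
    apply: (@Habs_mono _ _ _ 0%N) => //; last first.
      by cbv beta; rewrite HX // eq_sym (negbTE i0n0); mlia.
    move=> i ip; cbv beta; rewrite HX //.
    case: (eqVneq i i0) => [->|ne]; first by mlia.
    by case: (eqVneq i 0%N) => [->|?]; mlia.
  have HM := @Habs_move p (fun i => `|a`_i - (xf f i)%:Z|)
     (fun i => `|a`_i - (i == 0%N)%:Z - (xf f' i)%:Z|) i0 0%N i0p Hp.
  apply: le_lt_trans (HM _ _ _ _ _) _.
  - by move=> e; rewrite e eqxx in i0n0.
  - move=> i ip ii0 i00; cbv beta; rewrite HX // (_ : (i == i0) = false); last by apply/eqP.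
    rewrite (_ : (i == 0%N) = false); last by apply/eqP.
    by mlia.
  - by cbv beta; rewrite HX // eqxx (negbTE i0n0) -/v; mlia.
  - by cbv beta; rewrite HX // eqxx eq_sym (negbTE i0n0); mlia.
  - by cbv beta; rewrite -/v; mlia.
  - cbv beta; rewrite -/v -[X in _ < X]addr0 ltrD2l; mlia.
-
  case: (eqVneq J 0%N) => [J0|Jn0].
    rewrite le_eqVlt; apply/orP; left; apply/eqP; apply: Habs_ext => j jq.
    rewrite (HY j jq); case: (eqVneq j 0%N) => [->|jn0]; first by rewrite J0; mlia.
    by rewrite J0 (negbTE jn0); mlia.
  have HM := @Habs_move q (fun j => `|b`_j - (yf f j)%:Z|)
     (fun j => `|b`_j - (j == 0%N)%:Z - (yf f' j)%:Z|) 0%N J Hq Jq.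
  have bJ : b`_J <= b`_0 - 1 by apply: Hbmono; rewrite Jq lt0n Jn0.
  have HY0 := HY 0%N Hq; have HYJ := HY J Jq.
  rewrite eqxx in HYJ; rewrite eq_sym (negbTE Jn0) in HY0.
  apply: le_trans (HM _ _ _ _ _) _.
  - by move=> e; rewrite -e eqxx in Jn0.
  - move=> j jq j0 jJ; cbv beta; rewrite (HY j jq) (_ : (j == J) = false); last by apply/eqP.
    rewrite (_ : (j == 0%N) = false); last by apply/eqP.
    by mlia.
  - by cbv beta; mlia.
  - by cbv beta; rewrite (negbTE Jn0); mlia.
  - by cbv beta; mlia.
  - cbv beta; rewrite -[X in _ <= X]addr0 lerD2l; mlia.
Qed.

End Core.

Lemma dom_nn (s : seq int) i : dominant s -> (i < size s)%N -> 0 <= s`_i.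
Proof. by case/andP=> _ /allP H ip; apply: H; exact: mem_nth. Qed.

Lemma dom_mono (s : seq int) i j : dominant s -> (i <= j)%N -> (j < size s)%N -> s`_j <= s`_i.
Proof.
case/andP=> H _ ij js.
have := @sorted_leq_nth _ (fun u v : int => v <= u) _ _ 0 _ H i j.
rewrite !inE; apply => //; try (by move=> x y z h1 h2; exact: le_trans h2 h1).
exact: leq_ltn_trans ij js.
Qed.

Unset Implicit Arguments.

Theorem proposition3p1 (R : rcfType) (p q : nat)
    (a : p.-tuple int) (b : q.-tuple int) :
  (1 <= p)%N -> (p <= q)%N ->
  dominant a -> dominant b ->
  u_large p q a b ->
  dominant (minus_first a) -> dominant (minus_first b) ->
  (((2 * p + 1)%N%:Z <= b`_0) ->
     spin_norm R p q (minus_first a) (minus_first b) < spin_norm R p q a b) /\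
  (((2 * q + 1)%N%:Z <= a`_0) ->
     spin_norm R p q (minus_first a) (minus_first b) < spin_norm R p q a b).
Proof.
move=> Hp pq Da Db _ Da' Db'.
have Hq : (0 < q)%N by exact: leq_trans Hp pq.
have Ha : size a = p by rewrite size_tuple.
have Hb : size b = q by rewrite size_tuple.
have Ha0 : 1 <= a`_0.
  have := @dom_nn _ 0%N Da'; rewrite size_mf Ha mf_nth ?Ha // eqxx => /(_ Hp); mlia.
have Hb0 : 1 <= b`_0.
  have := @dom_nn _ 0%N Db'; rewrite size_mf Hb mf_nth ?Hb // eqxx => /(_ Hq); mlia.
have Hamono : forall i, (0 < i < p)%N -> a`_i <= a`_0 - 1.
  move=> i /andP[i0 ip]; have := @dom_mono _ 0%N i Da'.
  rewrite size_mf Ha !mf_nth ?Ha // eqxx => /(_ isT ip).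
  by rewrite (negbTE (lt0n_neq0 i0)) subr0.
have Hbmono : forall j, (0 < j < q)%N -> b`_j <= b`_0 - 1.
  move=> i /andP[i0 ip]; have := @dom_mono _ 0%N i Db'.
  rewrite size_mf Hb !mf_nth ?Hb // eqxx => /(_ isT ip).
  by rewrite (negbTE (lt0n_neq0 i0)) subr0.
have Hann : forall i, (i < p)%N -> 0 <= a`_i by move=> i ip; apply: dom_nn; rewrite ?Ha.
have Hbnn : forall j, (j < q)%N -> 0 <= b`_j by move=> i ip; apply: dom_nn; rewrite ?Hb.
have Ha' : size (minus_first a) = p by rewrite size_mf.
have Hb' : size (minus_first b) = q by rewrite size_mf.
split => hb; apply: spin_lt => // f Hf.
- have Y0 : (yf f 0 <= p)%N by apply: yf_le.
  case: (lerP 1 (a`_0 - (xf f 0)%:Z)) => h.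
    exists f; split => //; apply: case1 => //; mlia.
  apply: caseA2 => //; mlia.
- have X0 : (xf f 0 <= q)%N by apply: xf_le.
  case: (lerP 1 (b`_0 - (yf f 0)%:Z)) => h.
    exists f; split => //; apply: case1 => //; mlia.
  apply: caseB2 => //; mlia.
Qed.
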